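(* Let $\mathcal{U}$ and $\mathcal{V}$ be linear subspaces of $\mathbb{R}^n$ with $p := \dim \mathcal{U}$, $q := \dim\mathcal{V}$, $s := \dim(\mathcal{U}\cap\mathcal{V})$, and let $\alpha_1,\alpha_2\in\mathbb{R}$. Then the eigenvalues of $T = \Pi_{\mathcal{U}}^{\alpha_2}\Pi_{\mathcal{V}}^{\alpha_1}$ are $$\{1\}^s,\quad \{(1-\alpha_1)(1-\alpha_2)\}^{s+n-p-q},\quad \{1-\alpha_2\}^{\max(0,q-p)},\quad \{1-\alpha_1\}^{\max(0,p-q)},$$ together with $\lambda_i^{1}$ and $\lambda_i^{2}$ for every $i\in\{s+1,\dots,\min(p,q)\}$, where $$\lambda_i^{1,2} = \tfrac12\left(2-\alpha_1-\alpha_2+\alpha_1\alpha_2\cos^2\theta_i\right)\pm\sqrt{\tfrac14\left(2-\alpha_1-\alpha_2+\alpha_1\alpha_2\cos^2\theta_i\right)^2-(1-\alpha_1)(1-\alpha_2)},$$ and $\{\lambda\}^j$ denotes the eigenvalue $\lambda$ with (possibly zero) multiplicity $j$.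
   Context: For a closed nonempty set $C$, $\Pi_C$ is the (Euclidean) projection onto $C$ and the relaxed projection with parameter $\alpha$ is $\Pi_C^\alpha := (1-\alpha)I+\alpha\Pi_C$. The principal angles $\theta_1\le\theta_2\le\dots\le\theta_{\min(p,q)}$ in $[0,\pi/2]$ between $\mathcal{U}$ and $\mathcal{V}$ are defined recursively by $\cos\theta_k = \max\langle u_k,v_k\rangle$ over $u_k\in\mathcal{U}$, $v_k\in\mathcal{V}$ with $\|u_k\|=\|v_k\|=1$ and $\langle u_k,v_i\rangle=\langle u_i,v_k\rangle=0$ for $i=1,\dots,k-1$; exactly the first $s$ of them are zero. The square root may be complex. *)

(* Defs.v *)
From HB Require Import structures.
From mathcomp Require Import all_boot all_order all_algebra.
From mathcomp Require Import reals.
From mathcomp Require Import complex.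
Set Implicit Arguments.
Unset Strict Implicit.
Unset Printing Implicit Defensive.
Import Order.TTheory GRing.Theory Num.Theory.
Local Open Scope ring_scope.

(* Vectors of R^n are column vectors 'cV[R]_n; linear subspaces of R^n are
   {vspace 'cV[R]_n}; linear maps are n x n matrices acting by M *m x. *)

Definition dotv (R : realType) (n : nat) (x y : 'cV[R]_n) : R :=
  \sum_(i < n) x i 0 * y i 0.

Definition enorm (R : realType) (n : nat) (x : 'cV[R]_n) : R :=
  Num.sqrt (dotv x x).

Definition is_euclid_proj (R : realType) (n : nat) (C : pred 'cV[R]_n)
    (x y : 'cV[R]_n) : Prop :=
  C y /\ forall c, C c -> enorm (x - y) <= enorm (x - c).

Definition is_proj_matrix (R : realType) (n : nat) (U : {vspace 'cV[R]_n})
    (P : 'M[R]_n) : Prop :=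
  forall x : 'cV[R]_n, is_euclid_proj (fun y => y \in U) x (P *m x).

Definition relax_mx (R : realType) (n : nat) (alpha : R) (P : 'M[R]_n)
    : 'M[R]_n :=
  (1 - alpha)%:M + alpha *: P.

(* (u k, v k)_{k < m} are principal vector pairs of U and V, defined
   recursively as in the paper: u_k in U, v_k in V unit vectors with
   <u_k, v_i> = <u_i, v_k> = 0 for i < k, maximizing <u_k, v_k> among all
   such pairs; then cos theta_k = <u_k, v_k>. *)
Definition principal_vectors (R : realType) (n : nat)
    (U V : {vspace 'cV[R]_n}) (m : nat) (u v : nat -> 'cV[R]_n) : Prop :=
  forall k, (k < m)%N ->
    [/\ u k \in U, v k \in V, enorm (u k) = 1 /\ enorm (v k) = 1,
        (forall i, (i < k)%N -> dotv (u k) (v i) = 0 /\ dotv (u i) (v k) = 0)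
      & forall x y, x \in U -> y \in V -> enorm x = 1 -> enorm y = 1 ->
          (forall i, (i < k)%N -> dotv x (v i) = 0 /\ dotv (u i) y = 0) ->
          dotv x y <= dotv (u k) (v k)].

Definition RtoC (R : realType) (x : R) : R[i] := (x%:C)%C.

Definition lam_b (R : realType) (a1 a2 c : R) : R :=
  2 - a1 - a2 + a1 * a2 * c ^+ 2.

Definition lam1 (R : realType) (a1 a2 c : R) : R[i] :=
  RtoC (lam_b a1 a2 c / 2) +
  sqrtC (RtoC (lam_b a1 a2 c ^+ 2 / 4 - (1 - a1) * (1 - a2))).

Definition lam2 (R : realType) (a1 a2 c : R) : R[i] :=
  RtoC (lam_b a1 a2 c / 2) -
  sqrtC (RtoC (lam_b a1 a2 c ^+ 2 / 4 - (1 - a1) * (1 - a2))).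

(* Main.v *)
Require Import Defs.
From HB Require Import structures.
From mathcomp Require Import all_boot all_order all_algebra.
From mathcomp Require Import reals complex.
From mathcomp Require Import ring lra zify.
Import Order.TTheory GRing.Theory Num.Theory.
Local Open Scope ring_scope.
Set Implicit Arguments.
Unset Strict Implicit.
Unset Printing Implicit Defensive.

Section Dot.
Variables (R : realType) (n : nat).
Implicit Types (x y z : 'cV[R]_n) (A : 'M[R]_n).

Lemma dotvE x y : dotv x y = (x^T *m y) 0 0.
Proof. by rewrite /dotv !mxE; apply: eq_bigr => i _; rewrite !mxE. Qed.

Lemma dotvC x y : dotv x y = dotv y x.
Proof. by rewrite /dotv; apply: eq_bigr => i _; rewrite mulrC. Qed.

Lemma dotvDl x y z : dotv (x + y) z = dotv x z + dotv y z.
Proof. by rewrite /dotv -big_split; apply: eq_bigr => i _; rewrite mxE mulrDl. Qed.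

Lemma dotvDr x y z : dotv z (x + y) = dotv z x + dotv z y.
Proof. by rewrite dotvC dotvDl !(dotvC z). Qed.

Lemma dotvZl a x y : dotv (a *: x) y = a * dotv x y.
Proof. by rewrite /dotv mulr_sumr; apply: eq_bigr => i _; rewrite mxE mulrA. Qed.

Lemma dotvZr a x y : dotv y (a *: x) = a * dotv y x.
Proof. by rewrite dotvC dotvZl dotvC. Qed.

Lemma dotvNl x y : dotv (- x) y = - dotv x y.
Proof. by rewrite -scaleN1r dotvZl mulN1r. Qed.

Lemma dotvNr x y : dotv y (- x) = - dotv y x.
Proof. by rewrite dotvC dotvNl dotvC. Qed.

Lemma dotvBl x y z : dotv (x - y) z = dotv x z - dotv y z.
Proof. by rewrite dotvDl dotvNl. Qed.

Lemma dotvBr x y z : dotv z (x - y) = dotv z x - dotv z y.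
Proof. by rewrite dotvDr dotvNr. Qed.

Lemma dotv0l x : dotv 0 x = 0.
Proof. by rewrite /dotv big1 // => i _; rewrite mxE mul0r. Qed.

Lemma dotv0r x : dotv x 0 = 0.
Proof. by rewrite dotvC dotv0l. Qed.

Lemma dotv_suml I (r : seq I) (P : pred I) (F : I -> 'cV[R]_n) y :
  dotv (\sum_(i <- r | P i) F i) y = \sum_(i <- r | P i) dotv (F i) y.
Proof.
rewrite /dotv exchange_big /=; apply: eq_bigr => j _.
by rewrite summxE mulr_suml.
Qed.

Lemma dotv_sumr I (r : seq I) (P : pred I) (F : I -> 'cV[R]_n) y :
  dotv y (\sum_(i <- r | P i) F i) = \sum_(i <- r | P i) dotv y (F i).
Proof. by rewrite dotvC dotv_suml; apply: eq_bigr => i _; rewrite dotvC. Qed.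

Lemma dotv_mull A x y : dotv (A *m x) y = dotv x (A^T *m y).
Proof. by rewrite !dotvE trmx_mul mulmxA. Qed.

Lemma dotv_ge0 x : 0 <= dotv x x.
Proof. by rewrite /dotv sumr_ge0 // => i _; rewrite -expr2 sqr_ge0. Qed.

Lemma dotv_eq0 x : dotv x x = 0 -> x = 0.
Proof.
move=> /eqP; rewrite /dotv psumr_eq0; last by move=> i _; rewrite -expr2 sqr_ge0.
move=> /allP H; apply/matrixP => i j; rewrite (ord1 j) mxE.
have := H i (mem_index_enum _); rewrite /= mulf_eq0 orbb => /eqP //.
Qed.

Lemma enorm_ge0 x : 0 <= enorm x.
Proof. exact: sqrtr_ge0. Qed.

Lemma enorm_sq x : enorm x ^+ 2 = dotv x x.
Proof. by rewrite /enorm sqr_sqrtr // dotv_ge0. Qed.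

Lemma enorm1 x : enorm x = 1 -> dotv x x = 1.
Proof. by move=> H; rewrite -enorm_sq H expr1n. Qed.

Lemma enorm1E x : dotv x x = 1 -> enorm x = 1.
Proof. by move=> H; rewrite /enorm H sqrtr1. Qed.

Lemma enorm_le x y : enorm x <= enorm y -> dotv x x <= dotv y y.
Proof. by rewrite /enorm ler_sqrt // dotv_ge0. Qed.

Lemma enormZ a x : enorm (a *: x) = `|a| * enorm x.
Proof.
by rewrite /enorm dotvZl dotvZr mulrA sqrtrM; [rewrite -expr2 sqrtr_sqr | rewrite -expr2 sqr_ge0].
Qed.

Lemma mx_ext m (B C : 'M[R]_(m, n)) : (forall x : 'cV[R]_n, B *m x = C *m x) -> B = C.
Proof.
move=> H; apply/matrixP => i j.
by have := congr1 (fun M : 'cV_m => M i 0) (H (delta_mx j 0)); rewrite -!colE !mxE.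
Qed.

Lemma mx_ext0 m (B : 'M[R]_(m, n)) : (forall x : 'cV[R]_n, B *m x = 0) -> B = 0.
Proof. by move=> H; apply: mx_ext => x; rewrite H mul0mx. Qed.

End Dot.

Lemma quad_zero (R : realType) (d K : R) : 0 <= K -> (forall t, t * d <= t ^+ 2 * K) -> d = 0.
Proof.
move=> K0 H; have K1 : 0 < K + 1 by lra.
pose e := (K + 1)^-1.
have e0 : 0 < e by rewrite invr_gt0.
have eK : e * (K + 1) = 1 by rewrite mulVf // gt_eqF.
have := H (d * e); rewrite exprMn => H1.
have H2 : e * (d * d) <= e * (e * (d * d * K)).
  by move: H1; rewrite expr2; congr (_ <= _); ring.
have H3 : d * d <= e * (d * d * K) by rewrite -(ler_pM2l e0).
have H4 : (K + 1) * (d * d) <= d * d * K.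
  have eK' : (K + 1) * e = 1 by rewrite mulrC.
  by have := ler_wpM2l (ltW K1) H3; rewrite [X in _ <= X]mulrA eK' mul1r.
have : d * d <= 0 by nra.
by move=> H5; apply/eqP; rewrite -sqrf_eq0 expr2; apply/eqP; apply: le_anti; rewrite H5 -expr2 sqr_ge0.
Qed.

Section Proj.
Variables (R : realType) (n : nat) (U : {vspace 'cV[R]_n}) (P : 'M[R]_n).
Hypothesis hP : is_proj_matrix U P.

Lemma proj_mem x : P *m x \in U.
Proof. by case: (hP x). Qed.

Lemma proj_orth x c : c \in U -> dotv (x - P *m x) c = 0.
Proof.
move=> cU; apply: (@quad_zero _ _ (dotv c c / 2)).
  by rewrite divr_ge0 // dotv_ge0.
move=> t; case: (hP x) => _ /(_ (P *m x + t *: c)) H.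
have : P *m x + t *: c \in U by rewrite memvD ?memvZ ?proj_mem.
move/H/enorm_le.
have -> : x - (P *m x + t *: c) = (x - P *m x) - t *: c by rewrite opprD addrA.
move: (x - P *m x) => e.
rewrite dotvBl !dotvBr !dotvZl !dotvZr (dotvC c e).
move=> H1; rewrite expr2; lra.
Qed.

Lemma dotv_ext0 z : (forall x : 'cV[R]_n, dotv x z = 0) -> z = 0.
Proof. by move=> H; apply: dotv_eq0; apply: H. Qed.

Lemma proj_TP : P^T *m P = P.
Proof.
have H : (1 - P)^T *m P = 0.
  apply: mx_ext0 => y; apply: dotv_ext0 => x.
  rewrite -mulmxA -dotv_mull mulmxBl mul1mx.
  by apply: proj_orth; apply: proj_mem.
by move/eqP: H; rewrite linearB /= trmx1 mulmxBl mul1mx subr_eq0 => /eqP <-.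
Qed.

Lemma proj_sym : P^T = P.
Proof. by rewrite -proj_TP trmx_mul trmxK proj_TP. Qed.

Lemma proj_idem : P *m P = P.
Proof. by rewrite -{1}proj_sym proj_TP. Qed.

Lemma proj_dot x y : dotv (P *m x) y = dotv x (P *m y).
Proof. by rewrite dotv_mull proj_sym. Qed.

Lemma proj_id x : x \in U -> P *m x = x.
Proof.
move=> xU; apply/eqP; rewrite eq_sym -subr_eq0; apply/eqP/dotv_eq0.
by apply: proj_orth; rewrite memvB ?proj_mem.
Qed.

Lemma proj_zero y : (forall c, c \in U -> dotv y c = 0) -> P *m y = 0.
Proof.
move=> H; apply: dotv_eq0; rewrite proj_dot mulmxA proj_idem dotvC.
by rewrite proj_dot H // proj_mem.
Qed.

Lemma proj_dotU x c : c \in U -> dotv x c = dotv (P *m x) c.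
Proof. by move=> cU; rewrite proj_dot proj_id. Qed.

End Proj.


Section Max.
Variables (R : realType) (n : nat).
Variables (PX PY : 'cV[R]_n -> Prop) (x0 y0 : 'cV[R]_n).
Hypothesis PXc : forall a b x y, PX x -> PX y -> PX (a *: x + b *: y).
Hypothesis PYc : forall a b x y, PY x -> PY y -> PY (a *: x + b *: y).
Hypothesis (PXx0 : PX x0) (PYy0 : PY y0).
Hypothesis (nx0 : enorm x0 = 1) (ny0 : enorm y0 = 1).
Hypothesis hmax : forall x y, PX x -> PY y -> enorm x = 1 -> enorm y = 1 ->
  dotv x y <= dotv x0 y0.

Let c := dotv x0 y0.

Lemma enorm_gt0 (x : 'cV[R]_n) : x != 0 -> 0 < enorm x.
Proof.
move=> x0'; rewrite /enorm sqrtr_gt0 lt_def dotv_ge0 andbT.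
by apply/eqP => /dotv_eq0 /eqP; rewrite (negbTE x0').
Qed.

Lemma normalize (x : 'cV[R]_n) : x != 0 -> enorm ((enorm x)^-1 *: x) = 1.
Proof.
move=> /enorm_gt0 H; rewrite enormZ ger0_norm ?invr_ge0 ?ltW //.
by rewrite mulVf // gt_eqF.
Qed.

Lemma max_bound x y : PX x -> PY y -> dotv x y <= c * enorm x * enorm y.
Proof.
move=> Px Py.
have [->|xn0] := eqVneq x 0; first by rewrite dotv0l /enorm dotv0l sqrtr0 !(mulr0, mul0r).
have [->|yn0] := eqVneq y 0; first by rewrite dotv0r /enorm dotv0l sqrtr0 !(mulr0, mul0r).
have ex := enorm_gt0 xn0; have ey := enorm_gt0 yn0.
have := hmax (PXc (enorm x)^-1 0 Px Px) (PYc (enorm y)^-1 0 Py Py).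
rewrite !scale0r !addr0 => /(_ (normalize xn0) (normalize yn0)).
rewrite dotvZl dotvZr mulrA -invfM => H.
have exy : 0 < enorm x * enorm y by rewrite mulr_gt0.
by rewrite -mulrA -ler_pdivrMr // mulrC.
Qed.

Lemma c_ge0 : 0 <= c.
Proof.
have := hmax (PXc (-1) 0 PXx0 PXx0) PYy0.
rewrite scale0r addr0 enormZ normrN normr1 mul1r => /(_ nx0 ny0).
by rewrite dotvZl; rewrite -/c; lra.
Qed.

Lemma max_eq y : PY y -> dotv x0 y = c * dotv y0 y.
Proof.
move=> Py.
pose w := 1 *: y + (- dotv y0 y) *: y0.
have Pw : PY w by apply: PYc.
have y0w : dotv y0 w = 0.
  by rewrite /w dotvDr !dotvZr enorm1 // mul1r mulr1 addrN.
suff : dotv x0 w = 0.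
  by rewrite /w dotvDr !dotvZr mul1r -/c; lra.
apply: (@quad_zero _ _ (c * dotv w w / 2)).
  by rewrite divr_ge0 // mulr_ge0 ?c_ge0 ?dotv_ge0.
move=> t; clearbody w.
have Pz : PY (1 *: y0 + t *: w) by apply: PYc.
have := max_bound PXx0 Pz; rewrite nx0 mulr1 scale1r dotvDr dotvZr -/c.
have zz : dotv (y0 + t *: w) (y0 + t *: w) = 1 + t ^+ 2 * dotv w w.
  rewrite dotvDl !dotvDr !dotvZl !dotvZr y0w (dotvC w y0) y0w enorm1 //.
  by rewrite expr2; ring.
have hz : enorm (y0 + t *: w) <= 1 + t ^+ 2 * dotv w w / 2.
  have hW := dotv_ge0 w; have ht := sqr_ge0 t.
  have h0 : 0 <= 1 + t ^+ 2 * dotv w w / 2.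
    by rewrite addr_ge0 // divr_ge0 // mulr_ge0.
  rewrite /enorm zz -(ger0_norm h0) -sqrtr_sqr ler_sqrt ?sqr_ge0 //.
  have hq : 0 <= (t ^+ 2 * dotv w w / 2) ^+ 2 by apply: sqr_ge0.
  move: hq; rewrite !expr2; lra.
have := c_ge0 => hc H.
have := ler_wpM2l hc hz; lra.
Qed.

End Max.


Lemma pv_sym (R : realType) n (U V : {vspace 'cV[R]_n}) m u v :
  principal_vectors U V m u v -> principal_vectors V U m v u.
Proof.
move=> H k km; have [uU vV [nu nv] orth mx] := H k km.
split=> //.
- by move=> i ik; have [h1 h2] := orth i ik; rewrite dotvC h2 dotvC h1.
- move=> x y xV yU nx ny hc; rewrite dotvC (dotvC (v k)); apply: mx => //.
  by move=> i ik; have [h1 h2] := hc i ik; rewrite dotvC h2 dotvC h1.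
Qed.

Section PV.
Variables (R : realType) (n : nat) (U V : {vspace 'cV[R]_n}) (PU PV : 'M[R]_n).
Variables (m : nat) (u v : nat -> 'cV[R]_n).
Hypotheses (hPU : is_proj_matrix U PU) (hPV : is_proj_matrix V PV).
Hypothesis hpv : principal_vectors U V m u v.

Definition cc k := dotv (u k) (v k).

Lemma pv_uU k : (k < m)%N -> u k \in U.
Proof. by move=> km; case: (hpv km). Qed.
Lemma pv_vV k : (k < m)%N -> v k \in V.
Proof. by move=> km; case: (hpv km). Qed.
Lemma pv_nu k : (k < m)%N -> dotv (u k) (u k) = 1.
Proof. by move=> km; case: (hpv km) => _ _ [h _] _ _; apply: enorm1. Qed.
Lemma pv_nv k : (k < m)%N -> dotv (v k) (v k) = 1.
Proof. by move=> km; case: (hpv km) => _ _ [_ h] _ _; apply: enorm1. Qed.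

Lemma pv_cross i j : (i < m)%N -> (j < m)%N -> i != j -> dotv (u j) (v i) = 0.
Proof.
move=> im jm; case: (ltngtP i j) => // h _.
  by case: (hpv jm) => _ _ _ /(_ i h) [].
by case: (hpv im) => _ _ _ /(_ j h) [].
Qed.

Lemma pv_max k x y : (k < m)%N -> x \in U -> y \in V -> enorm x = 1 -> enorm y = 1 ->
  (forall i, (i < k)%N -> dotv x (v i) = 0 /\ dotv (u i) y = 0) -> dotv x y <= cc k.
Proof. by move=> km; case: (hpv km) => _ _ _ _; apply. Qed.

Lemma pv_mono j l : (j <= l)%N -> (l < m)%N -> cc l <= cc j.
Proof.
move=> jl lm; apply: pv_max; first exact: leq_ltn_trans lm.
- exact: pv_uU.
- exact: pv_vV.
- by apply: enorm1E; apply: pv_nu.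
- by apply: enorm1E; apply: pv_nv.
move=> i ij; have il : (i < l)%N by apply: leq_trans jl.
by case: (hpv lm) => _ _ _ /(_ i il).
Qed.

Lemma cc_ge0 k : (k < m)%N -> 0 <= cc k.
Proof.
move=> km; have := @pv_max k (- u k) (v k) km.
rewrite rpredN pv_uU // pv_vV // => /(_ isT isT).
rewrite -scaleN1r enormZ normrN normr1 mul1r dotvZl mulN1r.
have h1 := enorm1E (pv_nu km); have h2 := enorm1E (pv_nv km).
move=> /(_ h1 h2) H.
have : - cc k <= cc k.
  apply: H => i ik; case: (hpv km) => _ _ _ /(_ i ik) [h1' h2'] _.
  by rewrite dotvZl h1' h2' mulr0.
rewrite /cc; lra.
Qed.

Lemma cc_le1 k : (k < m)%N -> cc k <= 1.
Proof.
move=> km; have := dotv_ge0 (u k - v k).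
rewrite dotvBl !dotvBr pv_nu // pv_nv // (dotvC (v k)) /cc; lra.
Qed.

Lemma pv_half k : (k < m)%N -> PV *m u k = cc k *: v k.
Proof.
elim/ltn_ind: k => k IH km.
pose PX x := x \in U /\ forall i, (i < k)%N -> dotv x (v i) = 0.
pose PY y := y \in V /\ forall i, (i < k)%N -> dotv (u i) y = 0.
have PXc : forall a b x y, PX x -> PX y -> PX (a *: x + b *: y).
  move=> a b x y [xU hx] [yU hy]; split; first by rewrite memvD ?memvZ.
  by move=> i ik; rewrite dotvDl !dotvZl hx // hy // !mulr0 addr0.
have PYc : forall a b x y, PY x -> PY y -> PY (a *: x + b *: y).
  move=> a b x y [xU hx] [yU hy]; split; first by rewrite memvD ?memvZ.
  by move=> i ik; rewrite dotvDr !dotvZr hx // hy // !mulr0 addr0.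
have [uU vV [nu nv] orth mx] := hpv km.
have PXu : PX (u k) by split => // i ik; case: (orth i ik).
have PYv : PY (v k) by split => // i ik; case: (orth i ik).
have hmax : forall x y, PX x -> PY y -> enorm x = 1 -> enorm y = 1 ->
    dotv x y <= dotv (u k) (v k).
  move=> x y [xU hx] [yV hy] nx ny; apply: mx => // i ik.
  by rewrite hx ?hy.
have key := max_eq PXc PYc PXu PYv nu nv hmax.
set z := PV *m u k.
have PYz : PY z.
  split; first exact: proj_mem hPV _.
  move=> i ik; rewrite /z -(proj_dot hPV) IH //; last exact: ltn_trans km.
  by rewrite dotvZl dotvC; case: (orth i ik) => -> _; rewrite mulr0.
have PYd : PY (1 *: z + (- cc k) *: v k) by apply: PYc.
apply/eqP; rewrite -subr_eq0; apply/eqP/dotv_eq0.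
have -> : z - cc k *: v k = 1 *: z + (- cc k) *: v k by rewrite scale1r scaleNr.
move: PYd; set d := 1 *: z + _ => PYd.
have dV : d \in V by case: PYd.
rewrite {1}/d dotvDl !dotvZl /z (proj_dot hPV) (proj_id hPV dV).
by rewrite key // mul1r /cc; ring.
Qed.

End PV.


Section Decomp.
Variables (R : realType) (n : nat) (U : {vspace 'cV[R]_n}) (r : nat) (w : nat -> 'cV[R]_n).
Hypothesis wU : forall i, (i < r)%N -> w i \in U.
Hypothesis wON : forall i j, (i < r)%N -> (j < r)%N -> dotv (w i) (w j) = (i == j)%:R.

Definition Pim := 1%:M - \sum_(i < r) w i *m (w i)^T.

Lemma PimE x : Pim *m x = x - \sum_(i < r) dotv (w i) x *: w i.
Proof.
rewrite /Pim mulmxBl mul1mx mulmx_suml; congr (_ - _); apply: eq_bigr => i _.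
by rewrite -mulmxA [_ *m x]mx11_scalar -dotvE mul_mx_scalar.
Qed.

Definition Usub := (linfun (mulmx Pim) @: U)%VS.

Lemma decompE x : x = \sum_(i < r) dotv (w i) x *: w i + Pim *m x.
Proof. by rewrite PimE addrC subrK. Qed.

Lemma dot_w_sum j (k : 'I_r -> R) (jr : (j < r)%N) :
  dotv (w j) (\sum_(i < r) k i *: w i) = k (Ordinal jr).
Proof.
rewrite dotv_sumr (bigD1 (Ordinal jr)) //= big1 ?addr0.
  by rewrite dotvZr wON // eqxx mulr1.
move=> i hi; rewrite dotvZr wON //.
have -> : (j == i) = false by apply/negbTE; move: hi; apply: contra => /eqP hj; apply/eqP/val_inj.
by rewrite mulr0.
Qed.

Lemma Pim_orth j x : (j < r)%N -> dotv (w j) (Pim *m x) = 0.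
Proof.
move=> jr; rewrite PimE dotvBr (dot_w_sum (fun i : 'I_r => dotv (w i) x) jr).
by rewrite subrr.
Qed.

Lemma Pim_U x : x \in U -> Pim *m x \in U.
Proof.
move=> xU; rewrite PimE rpredB // rpred_sum // => i _.
by rewrite memvZ // wU.
Qed.

Lemma Pim_fix y : (forall j, (j < r)%N -> dotv (w j) y = 0) -> Pim *m y = y.
Proof.
move=> H; rewrite PimE big1 ?subr0 // => i _.
by rewrite H // scale0r.
Qed.

Lemma memUsub y : (y \in Usub) = (y \in U) && [forall j : 'I_r, dotv (w j) y == 0].
Proof.
apply/memv_imgP/andP.
  case=> x xU ->; rewrite lfunE /=; split; first exact: Pim_U.
  by apply/forallP => j; apply/eqP; apply: Pim_orth.
case=> yU /forallP H; exists y => //; rewrite lfunE /= Pim_fix // => j jr.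
exact: (eqP (H (Ordinal jr))).
Qed.

Lemma memUsubP y : y \in Usub -> y \in U /\ forall j, (j < r)%N -> dotv (w j) y = 0.
Proof.
rewrite memUsub => /andP [yU /forallP H]; split => // j jr.
exact: (eqP (H (Ordinal jr))).
Qed.

Lemma memUsubI y : y \in U -> (forall j, (j < r)%N -> dotv (w j) y = 0) -> y \in Usub.
Proof.
by move=> yU H; rewrite memUsub yU; apply/forallP => j; apply/eqP; apply: H.
Qed.

Lemma Pim_Usub x : x \in U -> Pim *m x \in Usub.
Proof. by move=> xU; apply: memUsubI; [apply: Pim_U | move=> j jr; apply: Pim_orth]. Qed.

Definition wtup := [tuple of mkseq w r].

Lemma wtup_nth (i : 'I_r) : wtup`_i = w i.
Proof. by rewrite /= nth_mkseq. Qed.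

Lemma free_wtup : free wtup.
Proof.
apply/freeP => k Hk i.
have := dot_w_sum k (ltn_ord i).
have -> : Ordinal (ltn_ord i) = i by apply: val_inj.
move=> <-.
have -> : \sum_(j < r) k j *: w j = \sum_(j < r) k j *: wtup`_j.
  by apply: eq_bigr => j _; rewrite wtup_nth.
by rewrite Hk dotv0r.
Qed.

Lemma dimUsub : \dim U = (r + \dim Usub)%N.
Proof.
have dw : \dim <<wtup>> = r by rewrite (eqP free_wtup) size_tuple.
have EU : U = (<<wtup>> + Usub)%VS.
  apply/eqP; rewrite eqEsubv; apply/andP; split.
    apply/subvP => x xU; rewrite (decompE x) memv_add ?Pim_Usub //.
    rewrite rpred_sum // => i _; rewrite memvZ // -wtup_nth memv_span // mem_nth //.
    by rewrite size_tuple.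
  rewrite subv_add; apply/andP; split; last first.
    by apply/subvP => y /memUsubP [].
  apply/span_subvP => x /(nthP 0) [i ir <-]; move: ir; rewrite size_tuple => ir.
  by rewrite /= nth_mkseq // wU.
rewrite {1}EU dimv_disjoint_sum ?dw //.
apply/eqP; rewrite -subv0; apply/subvP => x /memv_capP [xs xU].
rewrite memv0; apply/eqP/dotv_eq0.
have [_ H] := memUsubP xU.
rewrite {1}(coord_span xs) dotv_suml big1 // => i _.
by rewrite dotvZl wtup_nth H // mulr0.
Qed.

End Decomp.


Section Matc.
Variables (R : realType) (n : nat).

Definition matc k (f : 'I_k -> 'cV[R]_n) : 'M[R]_(n, k) := \matrix_(i, j) f j i 0.

Lemma matcM k (A : 'M[R]_n) (f : 'I_k -> 'cV[R]_n) :
  A *m matc f = matc (fun j => A *m f j).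
Proof. by apply/matrixP => i j; rewrite !mxE; apply: eq_bigr => l _; rewrite !mxE. Qed.

Lemma matc_mul k (f : 'I_k -> 'cV[R]_n) (a : 'cV[R]_k) :
  matc f *m a = \sum_j a j 0 *: f j.
Proof.
apply/matrixP => i l; rewrite (ord1 l) !mxE summxE; apply: eq_bigr => j _.
by rewrite !mxE mulrC.
Qed.

Lemma matc_ext k (f g : 'I_k -> 'cV[R]_n) : (forall j, f j = g j) -> matc f = matc g.
Proof. by move=> H; apply/matrixP => i j; rewrite !mxE H. Qed.

Lemma mx_ext_cols m k (B C : 'M[R]_(m, k)) :
  (forall l : 'I_k, B *m delta_mx l (0 : 'I_1) = C *m delta_mx l (0 : 'I_1)) -> B = C.
Proof.
move=> H; apply/matrixP => i j.
by have := congr1 (fun M : 'cV_m => M i 0) (H j); rewrite -!colE !mxE.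
Qed.

End Matc.

Section Basis.
Variables (R : realType) (n : nat) (U : {vspace 'cV[R]_n}) (PU : 'M[R]_n).
Hypothesis hPU : is_proj_matrix U PU.
Variables (r : nat) (w : nat -> 'cV[R]_n).
Hypothesis wU : forall i, (i < r)%N -> w i \in U.
Hypothesis wON : forall i j, (i < r)%N -> (j < r)%N -> dotv (w i) (w j) = (i == j)%:R.

Local Notation Us := (Usub U r w).
Local Notation d := (\dim Us).
Local Notation bs := (vbasis Us).

Definition Ew : 'M[R]_(n, r) := matc (fun j : 'I_r => w j).
Definition Eb : 'M[R]_(n, d) := matc (fun j : 'I_d => bs`_j).
Definition Emx : 'M[R]_(n, r + d) := row_mx Ew Eb.

Lemma bs_mem (j : 'I_d) : bs`_j \in Us.
Proof. by apply: vbasis_mem; rewrite mem_nth // size_tuple. Qed.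

Lemma Eb_mem (a : 'cV[R]_d) : Eb *m a \in Us.
Proof. by rewrite matc_mul rpred_sum // => j _; rewrite memvZ // bs_mem. Qed.

Lemma PU_Emx : PU *m Emx = Emx.
Proof.
rewrite /Emx mul_mx_row /Ew /Eb !matcM; congr row_mx; apply: matc_ext => j.
  by rewrite (proj_id hPU) // wU.
by rewrite (proj_id hPU) //; have [] := memUsubP wU wON (bs_mem j).
Qed.

Lemma Emx_inj (a : 'cV[R]_(r + d)) : Emx *m a = 0 -> a = 0.
Proof.
rewrite -[a]vsubmxK /Emx mul_row_col.
set a1 := usubmx a; set a2 := dsubmx a => H.
have a10 : a1 = 0.
  apply/matrixP => i l; rewrite (ord1 l) [RHS]mxE.
  have := congr1 (dotv (w i)) H; rewrite dotvDr dotv0r.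
  have [_ hb] := memUsubP wU wON (Eb_mem a2); rewrite hb // addr0.
  rewrite /Ew matc_mul (dot_w_sum wON (fun j => a1 j 0) (ltn_ord i)) => <-.
  by congr (a1 _ 0); apply: val_inj.
move: H; rewrite a10 mulmx0 add0r /Eb matc_mul => H.
have a20 : a2 = 0.
  apply/matrixP => i l; rewrite (ord1 l) [RHS]mxE.
  by move/freeP: (basis_free (vbasisP Us)) => /(_ (fun j => a2 j 0) H i).
by rewrite a20 col_mx0.
Qed.

Definition coordv (x : 'cV[R]_n) : 'cV[R]_(r + d) :=
  col_mx (\col_(i < r) dotv (w i) x) (\col_(j < d) coord bs j (Pim r w *m x)).

Lemma Emx_coordv x : x \in U -> Emx *m coordv x = x.
Proof.
move=> xU; rewrite /Emx /coordv mul_row_col /Ew /Eb !matc_mul.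
rewrite {3}(decompE r w x); congr (_ + _).
  by apply: eq_bigr => i _; rewrite mxE.
rewrite {2}(coord_vbasis (Pim_Usub wU wON xU)).
by apply: eq_bigr => i _; rewrite mxE.
Qed.

Definition Lmx : 'M[R]_(r + d, n) := \matrix_(i, l) coordv (PU *m delta_mx l 0) i 0.

Lemma Emx_Lmx : Emx *m Lmx = PU.
Proof.
apply: mx_ext_cols => l; rewrite -mulmxA.
have -> : Lmx *m delta_mx l 0 = coordv (PU *m delta_mx l 0).
  by rewrite -colE; apply/matrixP => i j; rewrite (ord1 j) !mxE.
by rewrite Emx_coordv // proj_mem.
Qed.

Lemma Lmx_Emx : Lmx *m Emx = 1%:M.
Proof.
apply: mx_ext_cols => l; apply/eqP; rewrite -subr_eq0 -mulmxBl; apply/eqP.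
apply: Emx_inj; rewrite mulmxBl mulmxBr mul1mx !mulmxA Emx_Lmx -mulmxA.
by rewrite mulmxA PU_Emx subrr.
Qed.

Lemma Lmx_PU : Lmx *m PU = Lmx.
Proof. by rewrite -Emx_Lmx mulmxA Lmx_Emx mul1mx. Qed.

End Basis.


Section Sylv.
Variable (Rg : comNzRingType).

Lemma sylvester n k (A : 'M[Rg]_(n, k)) (B : 'M[Rg]_(k, n)) (x : Rg) :
  x ^+ k * \det (x%:M - A *m B) = x ^+ n * \det (x%:M - B *m A).
Proof.
pose M := block_mx (x%:M : 'M_n) A B (1%:M : 'M_k).
have h1 : M *m block_mx 1%:M 0 (- B) 1%:M = block_mx (x%:M - A *m B) A 0 1%:M.
  by rewrite mulmx_block !mulmx1 !mulmx0 !mul1mx !mulmxN !add0r subrr.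
have h2 : M *m block_mx 1%:M (- A) 0 (x%:M) = block_mx x%:M 0 B (x%:M - B *m A).
  rewrite mulmx_block !mulmx1 !mulmx0 !mul1mx !mulmxN !addr0 mul_mx_scalar mul_scalar_mx.
  by rewrite addNr addrC.
have d1 := congr1 determinant h1; rewrite det_mulmx det_lblock det_ublock !det1 !mulr1 in d1.
have d2 := congr1 determinant h2; rewrite det_mulmx det_ublock det_lblock det1 !det_scalar mul1r in d2.
by rewrite -d1 mulrC d2.
Qed.

Lemma schur_scalar p q (A : 'M[Rg]_p) (B : 'M[Rg]_(p, q)) (C : 'M[Rg]_(q, p)) (d : Rg) :
  \det (block_mx A B C d%:M) * d ^+ p = d ^+ q * \det (d *: A - B *m C).
Proof.
have h : block_mx A B C d%:M *m block_mx d%:M 0 (- C) 1%:M = block_mx (d *: A - B *m C) B 0 d%:M.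
  rewrite mulmx_block !mulmx1 !mulmx0 !mulmxN !mul_mx_scalar mul_scalar_mx.
  by rewrite subrr !add0r.
have := congr1 determinant h; rewrite det_mulmx det_lblock det_ublock det1 !det_scalar mulr1.
by move=> ->; rewrite mulrC.
Qed.

End Sylv.


Section CharT.
Variables (R : realType) (n P Q : nat) (PU PV : 'M[R]_n).
Variables (E : 'M[R]_(n, P)) (L : 'M[R]_(P, n)) (F : 'M[R]_(n, Q)) (L' : 'M[R]_(Q, n)).
Variables (G : 'M[R]_(P, Q)) (H : 'M[R]_(Q, P)) (a1 a2 : R).
Hypotheses (EL : E *m L = PU) (LE : L *m E = 1%:M) (FL : F *m L' = PV) (LF : L' *m F = 1%:M).
Hypotheses (PUF : PU *m F = E *m G) (PVE : PV *m E = F *m H).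

Let c1 := 1 - a1.
Let c2 := 1 - a2.
Let k := c1 * c2.
Let T := relax_mx a2 PU *m relax_mx a1 PV.

Let W := row_mx E F.
Let N := col_mx ((a2 * c1) *: L + (a1 * a2) *: (L *m PV)) ((c2 * a1) *: L').

Lemma T_WN : T = k%:M + W *m N.
Proof.
have hL : T = (c2 * c1)%:M + (c2 * a1) *: PV + (a2 * c1) *: PU + (a1 * a2) *: (PU *m PV).
  rewrite /T /relax_mx mulmxDl !mulmxDr -!scalemxAr -!scalemxAl.
  rewrite !mul_scalar_mx !mul_mx_scalar scalar_mxM mul_scalar_mx scale_scalar_mx.
  by rewrite !scalerA -/c1 -/c2 (mulrC a1 c2) addrA.
have hR : W *m N = (a2 * c1) *: PU + (a1 * a2) *: (PU *m PV) + (c2 * a1) *: PV.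
  rewrite /W /N mul_row_col !mulmxDr -!scalemxAr mulmxA EL FL.
  by rewrite (mulrC a2 c1).
rewrite hL hR /k (mulrC c2 c1) -!addrA; congr (_ + _).
by rewrite addrC -!addrA; congr (_ + _); rewrite addrC.
Qed.
Lemma LPU : L *m PU = L.
Proof. by rewrite -EL mulmxA LE mul1mx. Qed.

Lemma L'PV : L' *m PV = L'.
Proof. by rewrite -FL mulmxA LF mul1mx. Qed.

Lemma LF_G : L *m F = G.
Proof. by rewrite -LPU -mulmxA PUF mulmxA LE mul1mx. Qed.

Lemma L'E_H : L' *m E = H.
Proof. by rewrite -L'PV -mulmxA PVE mulmxA LF mul1mx. Qed.

Lemma PVF : PV *m F = F.
Proof. by rewrite -FL -mulmxA LF mulmx1. Qed.

Lemma NW_block : N *m W = block_mx ((a2 * c1)%:M + (a1 * a2) *: (G *m H)) (a2 *: G)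
  ((c2 * a1) *: H) ((c2 * a1)%:M).
Proof.
rewrite /N /W mul_col_row !mulmxDl -!scalemxAl LE -!mulmxA PVE PVF mulmxA LF_G L'E_H LF.
rewrite !scalemx1 -scalerDl; congr block_mx.
by congr (_ *: _); rewrite /c1; ring.
Qed.
Lemma charT :
  ('X - k%:P) ^+ (P + Q) * ('X - c2%:P) ^+ P * char_poly T =
  ('X - k%:P) ^+ n * ('X - c2%:P) ^+ Q *
  \det ((('X - c1%:P) * ('X - c2%:P))%:M - ((a1 * a2)%:P * 'X) *: map_mx polyC (G *m H)).
Proof.
set Y := 'X - k%:P.
have h1 : char_poly_mx T = Y%:M - map_mx polyC W *m map_mx polyC N.
  rewrite /char_poly_mx T_WN map_mxD map_scalar_mx map_mxM opprD addrA.
  by rewrite /Y (raddfB (@scalar_mx _ n)).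
have h2 := sylvester (map_mx polyC W) (map_mx polyC N) Y.
rewrite -h1 -map_mxM NW_block map_block_mx in h2.
rewrite (scalar_mx_block P Q) opp_block_mx add_block_mx !map_scalar_mx in h2.
rewrite -(raddfB (@scalar_mx _ Q)) !sub0r in h2.
set d := Y - (c2 * a1)%:P in h2.
have hd : d = 'X - c2%:P.
  rewrite /d /Y /k /c1 /c2 -!addrA; congr (_ + _).
  by rewrite -!polyCN -!polyCD; congr polyC; ring.
have h3 := schur_scalar (Y%:M - map_mx polyC ((a2 * c1)%:M + (a1 * a2) *: (G *m H)))
   (- map_mx polyC (a2 *: G)) (- map_mx polyC ((c2 * a1) *: H)) d.
have hM : d *: (Y%:M - map_mx polyC ((a2 * c1)%:M + (a1 * a2) *: (G *m H)))
     - (- map_mx polyC (a2 *: G)) *m (- map_mx polyC ((c2 * a1) *: H)) =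
     (('X - c1%:P) * ('X - c2%:P))%:M - ((a1 * a2)%:P * 'X) *: map_mx polyC (G *m H).
  rewrite mulmxN mulNmx opprK !map_mxZ -scalemxAl -scalemxAr -map_mxM scalerA.
  rewrite map_mxD map_scalar_mx map_mxZ opprD addrA -(raddfB (@scalar_mx _ P)).
  rewrite scalerBr scale_scalar_mx scalerA -addrA -opprD -scalerDl.
  rewrite hd; congr (_%:M - _ *: _).
    rewrite /Y /k /c1 /c2; apply/eqP; rewrite -subr_eq0; apply/eqP.
    rewrite !polyCB !polyCM polyC1; ring.
  rewrite /c1 /c2 !polyCB !polyCM polyC1; ring.
rewrite hM in h3.
have h2' : Y ^+ (P + Q) * \det (char_poly_mx T) = Y ^+ n *
  \det (block_mx (Y%:M - map_mx polyC ((a2 * c1)%:M + (a1 * a2) *: (G *m H)))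
   (- map_mx polyC (a2 *: G)) (- map_mx polyC ((c2 * a1) *: H)) d%:M) := h2.
have hc : char_poly T = \det (char_poly_mx T) by [].
rewrite hc -{1 2}hd.
transitivity (Y ^+ (P + Q) * \det (char_poly_mx T) * d ^+ P); first by ring.
rewrite h2' -mulrA h3; ring.
Qed.
End CharT.


Section DetGH.
Variables (R : realType) (r dU dV : nat) (c : nat -> R).

Definition Dm : 'M[R]_r := diag_mx (\row_(i < r) c i).
Definition Gb : 'M[R]_(r + dU, r + dV) := block_mx Dm 0 0 0.
Definition Hb : 'M[R]_(r + dV, r + dU) := block_mx Dm 0 0 0.

Lemma detGH (al be : {poly R}) :
  \det (al%:M - be *: map_mx polyC (Gb *m Hb)) =
  (\prod_(i < r) (al - be * (c i ^+ 2)%:P)) * al ^+ dU.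
Proof.
rewrite /Gb /Hb mulmx_block !mulmx0 !mul0mx !addr0 mulmx_diag map_block_mx.
rewrite map_diag_mx !raddf0 scale_block_mx !scaler0 (scalar_mx_block r dU).
rewrite opp_block_mx add_block_mx !oppr0 !addr0 det_ublock det_scalar.
congr (_ * _).
have -> : al%:M - be *: diag_mx (map_mx polyC (\row_j ((\row_i c i) 0 j * (\row_i c i) 0 j)))
  = diag_mx (\row_(i < r) (al - be * (c i ^+ 2)%:P)) :> 'M_r.
  apply/matrixP => i j; rewrite !mxE; case: (eqVneq i j) => [->|ne].
    by rewrite !mulr1n expr2.
  by rewrite !mulr0n mulr0 subr0.
by rewrite det_diag; apply: eq_bigr => i _; rewrite mxE.
Qed.

End DetGH.


Section Struct.
Variables (R : realType) (n : nat) (U V : {vspace 'cV[R]_n}) (PU PV : 'M[R]_n).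
Variables (m : nat) (u v : nat -> 'cV[R]_n) (r : nat).
Hypotheses (hPU : is_proj_matrix U PU) (hPV : is_proj_matrix V PV).
Hypothesis hpv : principal_vectors U V m u v.
Hypothesis hm : m = minn (\dim U) (\dim V).
Hypothesis hr_le : (r <= m)%N.
Hypothesis hr_nz : forall i, (i < r)%N -> cc u v i != 0.
Hypothesis hr_z : (r < m)%N -> cc u v r = 0.

Lemma pv_halfU k : (k < m)%N -> PU *m v k = cc u v k *: u k.
Proof.
move=> km; rewrite (pv_half hPU (pv_sym hpv) km).
by rewrite /cc dotvC.
Qed.

Lemma ltrm i : (i < r)%N -> (i < m)%N.
Proof. by move=> ir; apply: leq_trans hr_le. Qed.

Lemma uU i : (i < r)%N -> u i \in U.
Proof. by move=> ir; apply: (pv_uU hpv); apply: ltrm. Qed.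

Lemma vV i : (i < r)%N -> v i \in V.
Proof. by move=> ir; apply: (pv_vV hpv); apply: ltrm. Qed.

Lemma uON i j : (i < r)%N -> (j < r)%N -> dotv (u i) (u j) = (i == j)%:R.
Proof.
move=> ir jr; case: (eqVneq i j) => [->|ne]; first by rewrite (pv_nu hpv) // ltrm.
apply/eqP; rewrite -(mulIr_eq0 _ (mulIf (hr_nz jr))) /= mulrC -dotvZr.
rewrite -pv_halfU ?ltrm // -(proj_dot hPU) (proj_id hPU) ?uU //.
by rewrite (pv_cross hpv) ?ltrm // eq_sym.
Qed.

Lemma vON i j : (i < r)%N -> (j < r)%N -> dotv (v i) (v j) = (i == j)%:R.
Proof.
move=> ir jr; case: (eqVneq i j) => [->|ne]; first by rewrite (pv_nv hpv) // ltrm.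
apply/eqP; rewrite -(mulIr_eq0 _ (mulIf (hr_nz jr))) /= mulrC -dotvZr.
rewrite -(pv_half hPV hpv) ?ltrm // -(proj_dot hPV) (proj_id hPV) ?vV //.
by rewrite dotvC (pv_cross hpv) ?ltrm.
Qed.

Lemma pv_bound k x y : (k < m)%N -> x \in U -> y \in V ->
  (forall i, (i < k)%N -> dotv x (v i) = 0 /\ dotv (u i) y = 0) ->
  dotv x y <= cc u v k * enorm x * enorm y.
Proof.
move=> km xU yV hc.
pose PX x := x \in U /\ forall i, (i < k)%N -> dotv x (v i) = 0.
pose PY y := y \in V /\ forall i, (i < k)%N -> dotv (u i) y = 0.
have PXc : forall a b x y, PX x -> PX y -> PX (a *: x + b *: y).
  move=> a b x' y' [xU' hx] [yU' hy]; split; first by rewrite memvD ?memvZ.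
  by move=> i ik; rewrite dotvDl !dotvZl hx // hy // !mulr0 addr0.
have PYc : forall a b x y, PY x -> PY y -> PY (a *: x + b *: y).
  move=> a b x' y' [xU' hx] [yU' hy]; split; first by rewrite memvD ?memvZ.
  by move=> i ik; rewrite dotvDr !dotvZr hx // hy // !mulr0 addr0.
have [uU' vV' [nu nv] orth mx] := hpv km.
have PXu : PX (u k) by split => // i ik; case: (orth i ik).
have PYv : PY (v k) by split => // i ik; case: (orth i ik).
have hmax : forall x y, PX x -> PY y -> enorm x = 1 -> enorm y = 1 ->
    dotv x y <= dotv (u k) (v k).
  move=> x' y' [xU' hx] [yV' hy] nx ny; apply: mx => // i ik.
  by rewrite hx ?hy.
apply: (max_bound PXc PYc hmax).
  by split => // i ik; case: (hc i ik).
by split => // i ik; case: (hc i ik).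
Qed.

Local Notation Us := (Usub U r u).
Local Notation Vs := (Usub V r v).

Lemma Us_orth_v x i : x \in Us -> (i < r)%N -> dotv x (v i) = 0.
Proof.
move=> /(memUsubP (@uU) uON) [xU hx] ir.
rewrite -(proj_id hPU xU) (proj_dot hPU) pv_halfU ?ltrm //.
by rewrite dotvZr dotvC hx // mulr0.
Qed.

Lemma Vs_orth_u y i : y \in Vs -> (i < r)%N -> dotv (u i) y = 0.
Proof.
move=> /(memUsubP (@vV) vON) [yV hy] ir.
rewrite -(proj_id hPV yV) -(proj_dot hPV) (pv_half hPV hpv) ?ltrm //.
by rewrite dotvZl hy // mulr0.
Qed.

Lemma Us_orth_Vs x y : x \in Us -> y \in Vs -> dotv x y = 0.
Proof.
move=> xs ys.
have [xU _] := memUsubP (@uU) uON xs.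
have [yV _] := memUsubP (@vV) vON ys.
case: (ltnP r m) => [rm | mr].
  have hb : forall x' y', x' \in Us -> y' \in Vs -> dotv x' y' <= 0.
    move=> x' y' xs' ys'.
    have [xU' _] := memUsubP (@uU) uON xs'.
    have [yV' _] := memUsubP (@vV) vON ys'.
    have := pv_bound rm xU' yV'; rewrite hr_z // !mul0r; apply => i ir.
    by split; [apply: Us_orth_v | apply: Vs_orth_u].
  apply: le_anti; rewrite hb //=.
  by rewrite -oppr_le0 -dotvNl hb // rpredN.
have rmE : r = m by apply/eqP; rewrite eqn_leq hr_le.
have dU := dimUsub (@uU) uON; have dV := dimUsub (@vV) vON.
move: hm; rewrite -rmE /minn; case: ifP => _ hr.
  have : \dim Us = 0%N by move: dU; rewrite -hr -{1}(addn0 r) => /addnI.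
  move/eqP; rewrite dimv_eq0 => /eqP Us0; move: xs; rewrite Us0 memv0 => /eqP ->.
  by rewrite dotv0l.
have : \dim Vs = 0%N by move: dV; rewrite -hr -{1}(addn0 r) => /addnI.
move/eqP; rewrite dimv_eq0 => /eqP Vs0; move: ys; rewrite Vs0 memv0 => /eqP ->.
by rewrite dotv0r.
Qed.

Lemma Us_orth_V x y : x \in Us -> y \in V -> dotv x y = 0.
Proof.
move=> xs yV; rewrite (decompE r v y) dotvDr dotv_sumr big1 ?add0r.
  by apply: Us_orth_Vs => //; apply: (Pim_Usub (@vV) vON).
by move=> i _; rewrite dotvZr Us_orth_v // mulr0.
Qed.

Lemma capUV_coef x i : x \in U -> x \in V -> (i < m)%N ->
  dotv (u i) x = cc u v i ^+ 2 * dotv (u i) x.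
Proof.
move=> xU xV im.
have h1 : dotv (u i) x = cc u v i * dotv (v i) x.
  by rewrite -{1}(proj_id hPV xV) -(proj_dot hPV) (pv_half hPV hpv) // dotvZl.
have h2 : dotv (v i) x = cc u v i * dotv (u i) x.
  by rewrite -{1}(proj_id hPU xU) -(proj_dot hPU) pv_halfU // dotvZl.
by rewrite {1}h1 h2 mulrA expr2.
Qed.

Lemma capUV_span x j : x \in U -> x \in V -> (j < m)%N -> cc u v j < 1 ->
  x \in <<mkseq u j>>%VS.
Proof.
move=> xU xV jm cj.
have hP : Pim r u *m x = 0.
  have xs := Pim_Usub (@uU) uON xU.
  have [_ ho] := memUsubP (@uU) uON xs.
  apply: dotv_eq0; rewrite [X in dotv _ X]PimE dotvBr dotv_sumr big1 ?subr0.
    exact: Us_orth_V.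
  by move=> i _; rewrite dotvZr (dotvC (Pim r u *m x)) ho // mulr0.
rewrite (decompE r u x) hP addr0 rpred_sum // => i _.
case: (ltnP i j) => ij.
  by rewrite memvZ // memv_span // -[u i](@nth_mkseq _ 0 u j i) // mem_nth // size_mkseq.
have im : (i < m)%N by apply: ltrm.
have ci : cc u v i < 1 by apply: le_lt_trans cj; apply: (pv_mono hpv).
have c0 := cc_ge0 hpv im.
have h := capUV_coef xU xV im.
have : dotv (u i) x = 0.
  have hc2 : cc u v i ^+ 2 < 1 by rewrite expr2; nra.
  have nz : 1 - cc u v i ^+ 2 != 0 by rewrite subr_eq0 eq_sym lt_eqF.
  apply/eqP; rewrite -(mulIr_eq0 _ (mulIf nz)) mulrBr mulr1 mulrC -h subrr.
  by [].
by move=> ->; rewrite scale0r rpred0.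
Qed.

Lemma dim_cap_le : (\dim (U :&: V) <= m)%N.
Proof.
rewrite hm leq_min; apply/andP; split; apply: dimvS; [exact: capvSl | exact: capvSr].
Qed.

Lemma cc_one i : (i < \dim (U :&: V))%N -> cc u v i = 1.
Proof.
move=> hi.
have im : (i < m)%N by apply: leq_trans hi dim_cap_le.
apply/eqP; apply: contraT => ne.
have ci : cc u v i < 1 by rewrite lt_neqAle ne (cc_le1 hpv).
have : (U :&: V <= <<mkseq u i>>)%VS.
  apply/subvP => x /memv_capP [xU xV]; exact: capUV_span.
move/dimvS => h; have := leq_trans h (dim_span _); rewrite size_mkseq => h'.
by move: (leq_trans hi h'); rewrite ltnn.
Qed.

Lemma s_le_r : (\dim (U :&: V) <= r)%N.
Proof.
rewrite leqNgt; apply/negP => rs.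
have rm : (r < m)%N by apply: leq_trans rs dim_cap_le.
by move: (hr_z rm); rewrite cc_one // => /eqP; rewrite oner_eq0.
Qed.

End Struct.


Section Assemble.
Variables (R : realType) (n : nat) (U V : {vspace 'cV[R]_n}) (PU PV : 'M[R]_n).
Variables (m : nat) (u v : nat -> 'cV[R]_n) (r : nat).
Hypotheses (hPU : is_proj_matrix U PU) (hPV : is_proj_matrix V PV).
Hypothesis hpv : principal_vectors U V m u v.
Hypothesis hm : m = minn (\dim U) (\dim V).
Hypothesis hr_le : (r <= m)%N.
Hypothesis hr_nz : forall i, (i < r)%N -> cc u v i != 0.
Hypothesis hr_z : (r < m)%N -> cc u v r = 0.

Let hpv' := pv_sym hpv.
Let hm' : m = minn (\dim V) (\dim U). Proof. by rewrite minnC. Qed.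
Let ccC i : cc v u i = cc u v i. Proof. by rewrite /cc dotvC. Qed.
Let hr_nz' i : (i < r)%N -> cc v u i != 0. Proof. by rewrite ccC; apply: hr_nz. Qed.
Let hr_z' : (r < m)%N -> cc v u r = 0. Proof. by rewrite ccC; apply: hr_z. Qed.

Let uU := uU hpv hr_le.
Let vV := vV hpv hr_le.
Let uON := uON hPU hpv hr_le hr_nz.
Let vON := vON hPV hpv hr_le hr_nz.

Lemma Emx_diag r' (w : nat -> 'cV[R]_n) (W : {vspace 'cV[R]_n}) (c : nat -> R) :
  Ew r' w *m diag_mx (\row_(i < r') c i) = matc (fun j : 'I_r' => c j *: w j).
Proof. by rewrite mul_mx_diag; apply/matrixP => i j; rewrite !mxE mulrC. Qed.

Lemma PUF_gen : PU *m Emx V r v =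
  Emx U r u *m (Gb r (\dim (Usub U r u)) (\dim (Usub V r v)) (cc u v)).
Proof.
rewrite /Emx /Gb mul_mx_row mul_row_block !mulmx0 !addr0 /Dm Emx_diag //; congr row_mx.
  rewrite /Ew matcM; apply: matc_ext => j.
  by rewrite (pv_halfU hPU hpv) // (ltrm hr_le).
rewrite /Eb matcM.
have hz : forall j : 'I_(\dim (Usub V r v)), PU *m (vbasis (Usub V r v))`_j = 0.
  move=> j; apply: (proj_zero hPU) => y yU.
  apply: (Us_orth_V hPV hPU hpv' hm' hr_le hr_nz' hr_z') => //.
  exact: bs_mem.
by rewrite (matc_ext hz); apply/matrixP => i j; rewrite !mxE.
Qed.

End Assemble.

Section Assemble2.
Variables (R : realType) (n : nat) (U V : {vspace 'cV[R]_n}) (PU PV : 'M[R]_n).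
Variables (m : nat) (u v : nat -> 'cV[R]_n) (r : nat).
Hypotheses (hPU : is_proj_matrix U PU) (hPV : is_proj_matrix V PV).
Hypothesis hpv : principal_vectors U V m u v.
Hypothesis hm : m = minn (\dim U) (\dim V).
Hypothesis hr_le : (r <= m)%N.
Hypothesis hr_nz : forall i, (i < r)%N -> cc u v i != 0.
Hypothesis hr_z : (r < m)%N -> cc u v r = 0.

Let hpv' := pv_sym hpv.
Let hm' : m = minn (\dim V) (\dim U). Proof. by rewrite minnC. Qed.
Let ccC i : cc v u i = cc u v i. Proof. by rewrite /cc dotvC. Qed.
Let hr_nz' i : (i < r)%N -> cc v u i != 0. Proof. by rewrite ccC; apply: hr_nz. Qed.
Let hr_z' : (r < m)%N -> cc v u r = 0. Proof. by rewrite ccC; apply: hr_z. Qed.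

Let uU := uU hpv hr_le.
Let vV := vV hpv hr_le.
Let uON := uON hPU hpv hr_le hr_nz.
Let vON := vON hPV hpv hr_le hr_nz.

Local Notation dU := (\dim (Usub U r u)).
Local Notation dV := (\dim (Usub V r v)).

Lemma PVE_gen : PV *m Emx U r u = Emx V r v *m (Hb r dU dV (cc u v)).
Proof.
rewrite (PUF_gen hPV hPU hpv' hm' hr_le hr_nz' hr_z') /Hb /Gb /Dm.
have -> : \row_(i < r) cc v u i = \row_(i < r) cc u v i by apply/matrixP => i j; rewrite !mxE ccC.
by [].
Qed.

Lemma charT_final (a1 a2 : R) :
  ('X - ((1 - a1) * (1 - a2))%:P) ^+ ((r + dU) + (r + dV)) * ('X - (1 - a2)%:P) ^+ (r + dU)
    * char_poly (relax_mx a2 PU *m relax_mx a1 PV) =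
  ('X - ((1 - a1) * (1 - a2))%:P) ^+ n * ('X - (1 - a2)%:P) ^+ (r + dV) *
  ((\prod_(i < r) (('X - (1 - a1)%:P) * ('X - (1 - a2)%:P)
        - ((a1 * a2)%:P * 'X) * (cc u v i ^+ 2)%:P))
   * (('X - (1 - a1)%:P) * ('X - (1 - a2)%:P)) ^+ dU).
Proof.
rewrite (charT a1 a2 (Emx_Lmx hPU uU uON) (Lmx_Emx hPU uU uON)
  (Emx_Lmx hPV vV vON) (Lmx_Emx hPV vV vON) (PUF_gen hPU hPV hpv hm hr_le hr_nz hr_z) PVE_gen).
by rewrite detGH.
Qed.

End Assemble2.


Section PolyAsm.
Variables (R : realType) (a1 a2 : R).

Definition pA : {poly R} := 'X - ((1 - a1) * (1 - a2))%:P.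
Definition pB : {poly R} := 'X - (1 - a2)%:P.
Definition pC : {poly R} := 'X - (1 - a1)%:P.
Definition pO : {poly R} := 'X - 1%:P.
Definition ph (c : R) : {poly R} := 'X ^+ 2 - (lam_b a1 a2 c)%:P * 'X + ((1 - a1) * (1 - a2))%:P.
Definition pg (c : R) : {poly R} := pC * pB - ((a1 * a2)%:P * 'X) * (c ^+ 2)%:P.

Lemma pg_ph c : pg c = ph c.
Proof.
rewrite /pg /ph /pC /pB /lam_b ?polyCD ?polyCB ?polyCM ?polyCN ?polyCX ?polyC1 ?polyCn.
ring.
Qed.

Lemma pg1 : pg 1 = pO * pA.
Proof.
rewrite /pg /pO /pA /pC /pB expr1n ?polyCD ?polyCB ?polyCM ?polyCN ?polyC1; ring.
Qed.

Lemma ph0 : ph 0 = pC * pB.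
Proof. by rewrite -pg_ph /pg expr0n /= polyC0 mulr0 subr0. Qed.

Lemma poly_assemble (n r s dU dV : nat) (c : nat -> R) :
  (s <= r)%N -> (forall i, (i < s)%N -> c i = 1) ->
  (forall i, (r <= i)%N -> (i < minn (r + dU) (r + dV))%N -> c i = 0) ->
  ((r + dU) + (r + dV) <= s + n)%N ->
  pA ^+ ((r + dU) + (r + dV)) * pB ^+ (r + dU) *
   (pO ^+ s * pA ^+ (s + n - (r + dU) - (r + dV)) * pB ^+ (maxn 0 ((r + dV) - (r + dU)))
    * pC ^+ (maxn 0 ((r + dU) - (r + dV))) * \prod_(s <= i < minn (r + dU) (r + dV)) ph (c i))
  = pA ^+ n * pB ^+ (r + dV) * ((\prod_(i < r) pg (c i)) * (pC * pB) ^+ dU).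
Proof.
move=> hsr hs1 hz hn.
have hrm : (r <= minn (r + dU) (r + dV))%N by rewrite leq_min !leq_addr.
rewrite -(big_mkord xpredT (fun i => pg (c i))) (big_cat_nat (leq0n s) hsr) /=.
rewrite (big_cat_nat hsr hrm) /=.
rewrite [X in _ = _ * _ * (X * _ * _)](eq_big_nat _ _ (F2 := fun _ => pO * pA)); last first.
  by move=> i /andP [_ hi]; rewrite hs1 // pg1.
rewrite [X in _ = _ * _ * (_ * X * _)](eq_big_nat _ _ (F2 := fun i => ph (c i))); last first.
  by move=> i _; rewrite pg_ph.
rewrite [X in _ * (_ * (_ * X)) = _](eq_big_nat _ _ (F2 := fun _ => pC * pB)); last first.
  by move=> i /andP [hi1 hi2]; rewrite hz // ph0.
rewrite !prodr_const_nat subn0.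
move: (\prod_(s <= i < r) ph (c i)) => Pi.
have [t ht] : exists t, r = (s + t)%N by exists (r - s)%N; rewrite subnKC.
subst r.
set e := (s + n - _ - _)%N.
have hn' : n = (e + s + t + t + dU + dV)%N by rewrite /e; lia.
clearbody e; subst n.
case: (leqP dU dV) => hUV.
  have [d hd] : exists d, dV = (dU + d)%N by exists (dV - dU)%N; rewrite subnKC.
  subst dV.
  have -> : minn (s + t + dU) (s + t + (dU + d)) = (s + t + dU)%N by lia.
  have -> : maxn 0 (s + t + (dU + d) - (s + t + dU)) = d by lia.
  have -> : maxn 0 (s + t + dU - (s + t + (dU + d))) = 0%N by lia.
  have -> : (s + t + dU - (s + t))%N = dU by lia.
  rewrite !exprD !exprMn expr0; ring.
have [d hd] : exists d, dU = (dV + d)%N by exists (dU - dV)%N; rewrite subnKC // ltnW.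
subst dU.
have -> : minn (s + t + (dV + d)) (s + t + dV) = (s + t + dV)%N by lia.
have -> : maxn 0 (s + t + dV - (s + t + (dV + d))) = 0%N by lia.
have -> : maxn 0 (s + t + (dV + d) - (s + t + dV)) = d by lia.
have -> : (s + t + dV - (s + t))%N = dV by lia.
rewrite !exprD !exprMn expr0; ring.
Qed.

End PolyAsm.

Lemma lam_prod (R : realType) (a1 a2 c : R) :
  ('X - (lam1 a1 a2 c)%:P) * ('X - (lam2 a1 a2 c)%:P) =
  map_poly (real_complex R) (ph a1 a2 c).
Proof.
have e : forall x y : R[i], ('X - x%:P) * ('X - y%:P) = 'X ^+ 2 - (x + y)%:P * 'X + (x * y)%:P.
  by move=> x y; rewrite polyCD polyCM; ring.
rewrite e /ph [in RHS]rmorphD [in RHS]rmorphB !rmorphM /= !map_polyC map_polyX -expr2.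
set b := lam_b a1 a2 c.
congr (_ - _ * _ + _).
  apply: congr1; rewrite /lam1 /lam2 -/b.
  rewrite addrACA subrr addr0 /RtoC -rmorphD /=.
  by rewrite -splitr.
rewrite -!polyCM; apply: congr1; rewrite -rmorphM /= /lam1 /lam2 -/b.
set z := RtoC (b / 2); set w := sqrtC _.
have -> : (z + w) * (z - w) = z ^+ 2 - w ^+ 2 by ring.
rewrite sqrtCK /z /RtoC -rmorphXn -rmorphB /=; congr (real_complex R _).
by field.
Qed.


Unset Implicit Arguments.
Set Strict Implicit.

Theorem theorem1 (R : realType) (n : nat) (U V : {vspace 'cV[R]_n})
    (a1 a2 : R) (PU PV : 'M[R]_n) (u v : nat -> 'cV[R]_n) :
  is_proj_matrix U PU -> is_proj_matrix V PV ->
  let p := \dim U in let q := \dim V in let s := \dim (U :&: V)%VS in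
  principal_vectors U V (minn p q) u v ->
  let T := relax_mx a2 PU *m relax_mx a1 PV in
  char_poly (map_mx (@RtoC R) T) =
    ('X - (RtoC 1)%:P) ^+ s
    * ('X - (RtoC ((1 - a1) * (1 - a2)))%:P) ^+ (s + n - p - q)
    * ('X - (RtoC (1 - a2))%:P) ^+ (maxn 0 (q - p))
    * ('X - (RtoC (1 - a1))%:P) ^+ (maxn 0 (p - q))
    * \prod_(s <= i < minn p q)
        (('X - (lam1 a1 a2 (dotv (u i) (v i)))%:P)
         * ('X - (lam2 a1 a2 (dotv (u i) (v i)))%:P)).
Proof.
move=> hPU hPV p q s hpv T.
pose m := minn p q.
have hm : m = minn (\dim U) (\dim V) by [].
pose r := find (fun i => cc u v i == 0) (iota 0 m).
have hr_le : (r <= m)%N by rewrite /r -[X in (_ <= X)%N](size_iota 0 m) find_size.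
have hr_nz : forall i, (i < r)%N -> cc u v i != 0.
  move=> i ir; have := before_find 0 ir.
  by rewrite nth_iota ?add0n => [/negbT | ]; last exact: leq_trans ir hr_le.
have hr_z : (r < m)%N -> cc u v r = 0.
  move=> rm; have hh : has (fun i => cc u v i == 0) (iota 0 m) by rewrite has_find size_iota.
  by have := nth_find 0 hh; rewrite -/r nth_iota // add0n => /eqP.
have hcz : forall i, (r <= i)%N -> (i < m)%N -> cc u v i = 0.
  move=> i ri im; apply: le_anti; rewrite (cc_ge0 hpv) // andbT.
  have rm : (r < m)%N by apply: leq_ltn_trans ri im.
  by rewrite -(hr_z rm) (pv_mono hpv ri im).
have hdU := dimUsub (uU hpv hr_le) (uON hPU hpv hr_le hr_nz).
have hdV := dimUsub (vV hpv hr_le) (vON hPV hpv hr_le hr_nz).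
have hsr := s_le_r hPU hPV hpv hm hr_le hr_nz hr_z.
have hs1 := cc_one hPU hPV hpv hm hr_le hr_nz hr_z.
have hn : (\dim U + \dim V <= s + n)%N.
  rewrite -(dimv_sum_cap U V) addnC /s leq_add2l.
  have := dimvS (subvf (U + V)%VS); rewrite dimvf => h; apply: leq_trans h _.
  by rewrite /dim /= muln1.
have key := charT_final hPU hPV hpv hm hr_le hr_nz hr_z a1 a2.
set dU := \dim (Usub U r u) in hdU key.
set dV := \dim (Usub V r v) in hdV key.
have hreal : char_poly T = pO R ^+ s * pA a1 a2 ^+ (s + n - p - q) * pB a2 ^+ (maxn 0 (q - p))
    * pC a1 ^+ (maxn 0 (p - q)) * \prod_(s <= i < m) ph a1 a2 (cc u v i).
  apply: (mulfI (x := pA a1 a2 ^+ ((r + dU) + (r + dV)) * pB a2 ^+ (r + dU))).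
    by rewrite mulf_neq0 // expf_neq0 // polyXsubC_eq0.
  transitivity (pA a1 a2 ^+ n * pB a2 ^+ (r + dV) *
     ((\prod_(i < r) pg a1 a2 (cc u v i)) * (pC a1 * pB a2) ^+ dU)).
    exact: key.
  symmetry; rewrite /m /p /q hdU hdV; apply: poly_assemble => //.
  - by move=> i ri im; apply: hcz => //; rewrite /m /p /q hdU hdV.
  - by rewrite -hdU -hdV.
have hT : map_mx (@RtoC R) T = map_mx (real_complex R) T by [].
rewrite hT -map_char_poly hreal.
rewrite !rmorphM !rmorphXn rmorph_prod /=.
congr (_ ^+ _ * _ ^+ _ * _ ^+ _ * _ ^+ _ * _).
- by rewrite /pO map_polyXsubC.
- by rewrite /pA map_polyXsubC.
- by rewrite /pB map_polyXsubC.
- by rewrite /pC map_polyXsubC.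
by apply: eq_bigr => i _; rewrite lam_prod.
Qed.
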